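(* Let $k$ be a non-negative integer, $a_0,\dots,a_k\in\mathbb{C}$, and suppose $\Lambda=\sum_{i=0}^{k}a_i(Dx)^iD$ is a lowering operator. Let $\{B_n\}_{n\ge0}$ be a monic polynomial sequence with dual sequence $\{u_n\}_{n\ge0}$. The following statements are equivalent: (a) $\{B_n\}$ is $\Lambda$-Appell, i.e. $B^{[1]}_n(x;\Lambda)=B_n(x)$ for all $n\ge0$, where $B^{[1]}_n(x;\Lambda)=(n+1)^{-1}\big(\sum_{i=0}^{k}a_i(n+1)^i\big)^{-1}(\Lambda B_{n+1})(x)$; (b) ${}^t\Lambda(u_n)=\rho_nu_{n+1}$ for all $n\ge0$, where $\rho_n=(n+1)\sum_{i=0}^{k}a_i(n+1)^i$; (c) for all $n\ge0$, $u_n=(n!)^{-1}\Big(\prod_{s=1}^{n}\sum_{i=0}^{k}a_is^i\Big)^{-1}({}^t\Lambda)^nu_0$. Here ${}^t\Lambda=\sum_{i=0}^{k}a_i(-1)^{i+1}(Dx)^iD$ acting on forms.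
   Context: $\mathcal{P}$ is the space of complex polynomials, $\mathcal{P}'$ its algebraic dual, $\langle u,p\rangle$ the action of a form on a polynomial. $D$ is the derivative, $x$ multiplication by $x$, products are compositions. A lowering operator is a linear map $\mathcal{O}:\mathcal{P}\to\mathcal{P}$ with $\mathcal{O}(1)=0$ and $\deg\mathcal{O}(x^n)=n-1$, $n\ge1$. A monic polynomial sequence (MPS) is a sequence $\{B_n\}_{n\ge0}$ with $B_n$ monic of degree $n$; its dual sequence is the unique $\{u_n\}\subset\mathcal{P}'$ with $\langle u_n,B_m\rangle=\delta_{n,m}$. Transposes: $\langle {}^tT u,p\rangle=\langle u,Tp\rangle$; on forms $\langle Du,p\rangle=-\langle u,p'\rangle$ and $\langle xu,p\rangle=\langle u,xp\rangle$. *)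

(* Defs.v *)
(* The complex numbers are modelled as  R[i] = complex R
   for an arbitrary  R : realType  (any model of the real numbers). *)
From mathcomp Require Import all_boot all_algebra.
From mathcomp Require Export reals complex.
Set Implicit Arguments. Unset Strict Implicit. Unset Printing Implicit Defensive.
Import GRing.Theory.
Local Open Scope ring_scope.

Section Defs.
Variable C : comNzRingType.

Definition Dx (p : {poly C}) : {poly C} := ('X * p)^`().

Definition Lam (k : nat) (a : nat -> C) (p : {poly C}) : {poly C} :=
  \sum_(i < k.+1) a i *: iter i Dx p^`().

Definition lowering (O : {poly C} -> {poly C}) : Prop :=
  (forall p q : {poly C}, forall c : C, O (c *: p + q) = c *: O p + O q) /\
  O 1 = 0 /\ forall n : nat, (0 < n)%N -> size (O 'X^n) = n.

Definition form := {poly C} -> C.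
Definition is_form (u : form) : Prop :=
  forall (c : C) (p q : {poly C}), u (c *: p + q) = c * u p + u q.

Definition transpose (T : {poly C} -> {poly C}) (u : form) : form :=
  fun p => u (T p).

Definition MPS (B : nat -> {poly C}) : Prop :=
  forall n, B n \is monic /\ size (B n) = n.+1.

Definition dual_seq (B : nat -> {poly C}) (u : nat -> form) : Prop :=
  (forall n, is_form (u n)) /\
  forall n m, u n (B m) = (n == m)%:R.

Definition theta (k : nat) (a : nat -> C) (s : nat) : C :=
  \sum_(i < k.+1) a i * (s%:R) ^+ i.
End Defs.

(* Main.v *)
Require Import Defs.
From mathcomp Require Import all_boot all_algebra.
From mathcomp Require Import reals complex.
From mathcomp Require Import ring.
Import GRing.Theory Num.Theory.
Local Open Scope ring_scope.

Lemma alg_id (K : fieldType) (F P n t : K) : n != 0 -> t != 0 -> F != 0 -> P != 0 ->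
  F^-1 * P^-1 = n * t * ((n * F)^-1 * (P * t)^-1).
Proof.
move=> n0 t0 F0 P0; field. by rewrite n0 t0 F0 P0.
Qed.

Section Aux.
Variable R : realType.
Local Notation C := (R[i]).

Lemma form0 (u : {poly C} -> C) : is_form u -> u 0 = 0.
Proof.
move=> hu; have := hu 1 0 0; rewrite scale1r addr0 mul1r => h.
by apply: (@addrI _ (u 0)); rewrite addr0 -h.
Qed.

Lemma formD (u : {poly C} -> C) p q : is_form u -> u (p + q) = u p + u q.
Proof. by move=> hu; have := hu 1 p q; rewrite scale1r mul1r. Qed.

Lemma formZ (u : {poly C} -> C) c p : is_form u -> u (c *: p) = c * u p.
Proof. by move=> hu; have := hu c p 0; rewrite addr0 form0 // addr0. Qed.

Lemma formB (u : {poly C} -> C) p q : is_form u -> u (p - q) = u p - u q.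
Proof.
move=> hu; rewrite -scaleN1r formD // formZ //; by rewrite mulN1r.
Qed.

Lemma form_sum (u : {poly C} -> C) N (c : nat -> C) (B : nat -> {poly C}) :
  is_form u -> u (\sum_(j < N) c j *: B j) = \sum_(j < N) c j * u (B j).
Proof.
move=> hu; elim: N => [|N IH]; first by rewrite !big_ord0 form0.
by rewrite !big_ord_recr /= formD // IH formZ.
Qed.

Lemma lin_sum (O : {poly C} -> {poly C}) N (c : nat -> C) (B : nat -> {poly C}) :
  (forall p q : {poly C}, forall c : C, O (c *: p + q) = c *: O p + O q) ->
  O (\sum_(j < N) c j *: B j) = \sum_(j < N) c j *: O (B j).
Proof.
move=> hO.
have O0 : O 0 = 0.
  have := hO 0 0 1; rewrite !scale1r addr0 => h.
  by apply: (@addrI _ (O 0)); rewrite addr0 -h.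
elim: N => [|N IH]; first by rewrite !big_ord0.
by rewrite !big_ord_recr /= addrC hO IH addrC.
Qed.

Lemma span (B : nat -> {poly C}) : MPS B ->
  forall N (p : {poly C}), (size p <= N)%N -> exists c : nat -> C, p = \sum_(j < N) c j *: B j.
Proof.
move=> hB; elim=> [|N IH] p hp.
  by exists (fun _ => 0); rewrite big_ord0; apply/eqP; rewrite -size_poly_leq0.
have [mB sB] := hB N.
set r := p - p`_N *: B N.
have hr : (size r <= N)%N.
  apply/leq_sizeP => j hj; rewrite coefB coefZ.
  move: hj; rewrite leq_eqVlt => /orP [/eqP <-|hj].
    have -> : (B N)`_N = 1 by move/monicP: mB; rewrite lead_coefE sB.
    by rewrite mulr1 subrr.
  have h1 := (leq_sizeP _ _ hp j hj).
  have h2 := (leq_sizeP _ _ (eq_leq sB) j hj).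
  by rewrite h1 h2 mulr0 subrr.
have [c hc] := IH r hr.
exists (fun j => if j == N then p`_N else c j).
rewrite big_ord_recr /= eqxx.
rewrite (eq_bigr (fun j : 'I_N => c j *: B j)); last first.
  by move=> [j hj] _ /=; rewrite (ltn_eqF hj).
by rewrite -hc /r subrK.
Qed.

Lemma extract (B : nat -> {poly C}) u : dual_seq B u ->
  forall N (c : nat -> C) j, (j < N)%N -> u j (\sum_(i < N) c i *: B i) = c j.
Proof.
move=> [hf hd] N c j hj; rewrite form_sum //.
rewrite (bigD1 (Ordinal hj)) //= hd eqxx mulr1 big1 ?addr0 // => i hi.
rewrite hd; case: eqP => [e|]; last by rewrite mulr0.
exfalso; move/eqP: hi; apply; apply/val_inj; by rewrite /= e.
Qed.

Lemma Dx_Xn (c : C) m : Dx (c *: 'X^m) = (c * m.+1%:R) *: 'X^m.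
Proof.
rewrite /Dx -scalerAr -exprS derivZ derivXn /= -scaler_nat scalerA.
by rewrite mulr_natr.
Qed.

Lemma iterDx (c : C) m i : iter i (@Dx C) (c *: 'X^m) = (c * m.+1%:R ^+ i) *: 'X^m.
Proof.
elim: i => [|i IH]; first by rewrite expr0 mulr1.
by rewrite iterS IH Dx_Xn exprS -mulrA [_ * m.+1%:R]mulrC.
Qed.

Lemma Lam_Xn k (a : nat -> C) n : Lam k a 'X^(n.+1) = (n.+1%:R * theta k a n.+1) *: 'X^n.
Proof.
rewrite /Lam /theta derivXn /= -scaler_nat mulr_sumr scaler_suml.
apply: eq_bigr => i _.
have h := iterDx (n.+1%:R) n i. rewrite /= in h. rewrite h scalerA; congr (_ *: _).
by rewrite mulrCA.
Qed.

End Aux.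
Arguments span {R B}.
Arguments extract {R B u}.

Theorem proposition5 (R : realType) (k : nat) (a : nat -> R[i])
    (B : nat -> {poly R[i]}) (u : nat -> {poly R[i]} -> R[i]) :
  lowering (Lam k a) -> MPS B -> dual_seq B u ->
  let LamT := transpose (Lam k a) in
  let A := forall n : nat,
      B n = ((n.+1)%:R^-1 * (theta k a n.+1)^-1) *: Lam k a (B n.+1) in
  let Bc := forall n : nat,
      LamT (u n) = (fun p => (n.+1%:R * theta k a n.+1) * u n.+1 p) in
  let Cc := forall n : nat,
      u n = (fun p => ((n`!)%:R^-1 * (\prod_(1 <= s < n.+1) theta k a s)^-1)
                        * iter n LamT (u 0%N) p) in
  (A <-> Bc) /\ (Bc <-> Cc).
Proof.
move=> [hlin [hL1 hsz]] hB hu.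
have [hf hd] := hu.
set rho := fun n : nat => (n.+1%:R * theta k a n.+1 : R[i]).
have rho0 : forall n, rho n != 0.
  move=> n; apply/negP => /eqP h.
  have := hsz n.+1 isT; rewrite Lam_Xn -/(rho n) h scale0r size_poly0.
  by [].
have Lrho : forall n, Lam k a (B n.+1) = rho n *: B n ->
    B n = ((n.+1)%:R^-1 * (theta k a n.+1)^-1) *: Lam k a (B n.+1).
  by move=> n ->; rewrite scalerA -invfM -/(rho n) mulVf // scale1r.
have B0 : B 0%N = 1.
  have [mB sB] := hB 0%N.
  rewrite (size1_polyC (eq_leq sB)); move/monicP: mB; rewrite lead_coefE sB /=.
  by move=> ->.
have theta0 : forall s, (0 < s)%N -> theta k a s != 0.
  case=> // s _; move: (rho0 s); rewrite /rho mulf_eq0 negb_or => /andP[] //.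
have coef : forall n, ((n`!)%:R^-1 * (\prod_(1 <= s < n.+1) theta k a s)^-1) =
    rho n * (((n.+1)`!)%:R^-1 * (\prod_(1 <= s < n.+2) theta k a s)^-1).
  move=> n; rewrite factS natrM [in RHS]big_nat_recr //=.
  have P0 : \prod_(1 <= s < n.+1) theta k a s != 0.
    rewrite prodf_seq_neq0; apply/allP => s; rewrite mem_index_iota => /andP[hs _] /=; exact: theta0.
  have F0 : (n`!%:R : R[i]) != 0 by rewrite pnatr_eq0 -lt0n fact_gt0.
  have n0 : (n.+1%:R : R[i]) != 0 by rewrite pnatr_eq0.
  have t0 := theta0 n.+1 isT.
  by rewrite /rho -(@alg_id _ _ _ _ _ n0 t0 F0 P0).
rewrite /transpose.
split; split.
- move=> HA n; apply: boolp.funext => p /=.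
  have HL : forall m, Lam k a (B m.+1) = rho m *: B m.
    by move=> m; rewrite [in RHS](HA m) scalerA -invfM -/(rho m) divff ?rho0 // scale1r.
  have [c ->] := span hB _ _ (leqnn (size p)).
  rewrite lin_sum // (@form_sum R (u n) _ c (fun j => Lam k a (B j)) (hf n)) form_sum // mulr_sumr; apply: eq_bigr => j _.
  case: (nat_of_ord j) => [|m].
    by rewrite B0 hL1 form0 // mulr0 -B0 hd !mulr0.
  rewrite HL formZ // !hd eqSS; case: eqP => [->|]; first by rewrite /rho !mulr1 mulrC.
  by rewrite !mulr0.
- move=> HBc n; apply: Lrho.
  set q := Lam k a (B n.+1) - rho n *: B n.
  suff : q = 0 by move/eqP; rewrite subr_eq0 => /eqP.
  have [c hc] := span hB _ _ (leqnn (size q)).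
  rewrite hc big1 // => j _.
  rewrite -(extract hu _ c _ (ltn_ord j)) -hc /q formB // formZ //.
  have := congr1 (fun f => f (B n.+1)) (HBc j); rewrite /= => ->.
  rewrite !hd eqSS; case: eqP => [->|]; first by rewrite /rho subrr scale0r.
  by rewrite !mulr0 subrr scale0r.
- move=> HBc; elim=> [|n IH]; apply: boolp.funext => p /=.
    by rewrite big_geq // invr1 mulr1 /= mul1r.
  have := congr1 (fun f => f p) (HBc n); rewrite /= IH /= => h.
  apply: (mulfI (rho0 n)); rewrite -/(rho n) in h.
  by rewrite mulrA -coef h.
- move=> HCc n; apply: boolp.funext => p /=.
  rewrite (HCc n) (HCc n.+1) /= -/(rho n).
  rewrite coef !mulrA; congr (_ * _).
Qed.
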